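(* Let $d_1$ and $d_2$ be two metrics on the same set $X$. The following three statements are equivalent: (i) the set of sequences in $X$ that are $d_1$-statistically convergent coincides with the set of sequences in $X$ that are $d_2$-statistically convergent; (ii) the set of sequences that converge in $(X,d_1)$ coincides with the set of sequences that converge in $(X,d_2)$; (iii) $d_1$ and $d_2$ induce the same topology on $X$.
   Context: For a metric $d$ on $X$, a sequence $(x_n)$ of points of $X$ is $d$-statistically convergent to $a\in X$ if for every $\epsilon>0$, $\lim_{n\to\infty}\frac{1}{n}\left|\{k: k\le n,\ d(x_k,a)\ge\epsilon\}\right|=0$ ($|B|$ is the cardinality of $B$); it is $d$-statistically convergent if it is $d$-statistically convergent to some point of $X$. *)

(* Defs.v *)
From Stdlib Require Import Reals Lra List.
Open Scope R_scope.

Definition is_metric {X : Type} (d : X -> X -> R) : Prop :=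
  (forall x y, 0 <= d x y) /\
  (forall x y, d x y = 0 <-> x = y) /\
  (forall x y, d x y = d y x) /\
  (forall x y z, d x z <= d x y + d y z).

(* number of k in {0,...,n-1} with d (x k) a >= eps.
   Sequences are indexed from 0: x k stands for the paper's x_{k+1}, so this is
   |{k : 1 <= k <= n, d(x_k, a) >= eps}|. *)
Definition bad_count {X : Type} (d : X -> X -> R) (x : nat -> X) (a : X)
  (eps : R) (n : nat) : nat :=
  length (filter (fun k => if Rle_dec eps (d (x k) a) then true else false)
                 (seq 0 n)).

Definition stat_conv_to {X : Type} (d : X -> X -> R) (x : nat -> X) (a : X) : Prop :=
  forall eps, 0 < eps ->
    Un_cv (fun n => INR (bad_count d x a eps n) / INR n) 0.

Definition stat_convergent {X : Type} (d : X -> X -> R) (x : nat -> X) : Prop :=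
  exists a, stat_conv_to d x a.

Definition metric_conv_to {X : Type} (d : X -> X -> R) (x : nat -> X) (a : X) : Prop :=
  forall eps, 0 < eps -> exists N : nat, forall n, (N <= n)%nat -> d (x n) a < eps.

Definition metric_convergent {X : Type} (d : X -> X -> R) (x : nat -> X) : Prop :=
  exists a, metric_conv_to d x a.

Definition metric_open {X : Type} (d : X -> X -> R) (U : X -> Prop) : Prop :=
  forall x, U x -> exists r, 0 < r /\ forall y, d x y < r -> U y.

Definition same_topology {X : Type} (d1 d2 : X -> X -> R) : Prop :=
  forall U : X -> Prop, metric_open d1 U <-> metric_open d2 U.

(* Main.v *)
Require Import Defs.
From Stdlib Require Import Reals Lra Lia List ClassicalEpsilon Classical.
Open Scope R_scope.

Section S.
Context {X : Type}.

Lemma filter_len_mono {A} (f g : A -> bool) l :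
  (forall a, In a l -> f a = true -> g a = true) ->
  (length (filter f l) <= length (filter g l))%nat.
Proof.
  induction l as [|h t IH]; intros H; simpl; [lia|].
  assert (IH' : (length (filter f t) <= length (filter g t))%nat)
    by (apply IH; intros; apply H; simpl; auto).
  destruct (f h) eqn:E.
  - rewrite (H h (or_introl eq_refl) E). simpl. lia.
  - destruct (g h); simpl; lia.
Qed.

Lemma bad_count_S (d : X -> X -> R) x a e n :
  bad_count d x a e (S n) =
  (bad_count d x a e n + if Rle_dec e (d (x n) a) then 1 else 0)%nat.
Proof.
  unfold bad_count. rewrite seq_S, filter_app, length_app. simpl.
  destruct Rle_dec; simpl; lia.
Qed.

Lemma bc_le_n (d : X -> X -> R) x a e n : (bad_count d x a e n <= n)%nat.
Proof.
  induction n. unfold bad_count; simpl; lia.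
  rewrite bad_count_S. destruct Rle_dec; lia.
Qed.

Lemma squeeze (u v : nat -> R) : (forall n, 0 <= u n <= v n) -> Un_cv v 0 -> Un_cv u 0.
Proof.
  intros H Hv e He. destruct (Hv e He) as [N HN]. exists N. intros n Hn.
  specialize (HN n Hn). specialize (H n). unfold R_dist in *.
  rewrite Rminus_0_r in *. rewrite Rabs_pos_eq in HN by lra.
  rewrite Rabs_pos_eq by lra. lra.
Qed.

Lemma inv_nonneg n : 0 <= / INR n.
Proof.
  destruct n. simpl; rewrite Rinv_0; lra.
  left; apply Rinv_0_lt_compat, lt_0_INR; lia.
Qed.

Lemma ratio_nonneg a n : 0 <= INR a / INR n.
Proof. unfold Rdiv. apply Rmult_le_pos; [apply pos_INR|apply inv_nonneg]. Qed.

Lemma ratio_mono a b n : (a <= b)%nat -> INR a / INR n <= INR b / INR n.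
Proof. intros. unfold Rdiv. apply Rmult_le_compat_r; [apply inv_nonneg|apply le_INR; auto]. Qed.

Lemma ratio_const N : Un_cv (fun n => INR N / INR n) 0.
Proof.
  intros e He. destruct (INR_archimed e (INR N) He) as [M HM]. exists (S M).
  intros n Hn. unfold R_dist. rewrite Rminus_0_r.
  rewrite Rabs_pos_eq by (apply ratio_nonneg).
  apply le_INR in Hn. rewrite S_INR in Hn. assert (0 <= INR M) by apply pos_INR.
  apply Rmult_lt_reg_r with (INR n); [lra|]. unfold Rdiv.
  rewrite Rmult_assoc, Rinv_l by lra. rewrite Rmult_1_r. nra.
Qed.

Lemma mconv_stat (d : X -> X -> R) x a : metric_conv_to d x a -> stat_conv_to d x a.
Proof.
  intros H e He. destruct (H e He) as [N HN].
  apply squeeze with (fun n => INR N / INR n); [|apply ratio_const].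
  intros n; split; [apply ratio_nonneg|]. apply ratio_mono.
  induction n. unfold bad_count; simpl; lia.
  rewrite bad_count_S. destruct Rle_dec.
  - destruct (Compare_dec.le_lt_dec N n) as [l|l]; [specialize (HN n l); lra|].
    pose proof (bc_le_n d x a e n). lia.
  - lia.
Qed.

Lemma bc_lower (d : X -> X -> R) x a e :
  (forall k, e <= d (x k) a \/ e <= d (x (S k)) a) ->
  forall n, (n <= 2 * bad_count d x a e n + 1)%nat.
Proof.
  intros H.
  assert (forall n, (n <= 2 * bad_count d x a e n + 1)%nat /\
                    (S n <= 2 * bad_count d x a e (S n) + 1)%nat).
  { induction n as [|n [IH1 IH2]]. split; lia.
    split; [exact IH2|]. rewrite !bad_count_S.
    destruct (H n); destruct (Rle_dec e (d (x n) a)); destruct (Rle_dec e (d (x (S n)) a));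
      try lra; lia. }
  intro n; apply H0.
Qed.

Lemma not_stat (d : X -> X -> R) x a e : 0 < e ->
  (forall k, e <= d (x k) a \/ e <= d (x (S k)) a) -> ~ stat_conv_to d x a.
Proof.
  intros He Hk Hs. destruct (Hs e He (/4) ltac:(lra)) as [N HN].
  specialize (HN (N+2)%nat ltac:(lia)).
  unfold R_dist in HN; rewrite Rminus_0_r, Rabs_pos_eq in HN by apply ratio_nonneg.
  pose proof (bc_lower d x a e Hk (N+2)).
  assert (H4 : ((N+2) <= 4 * bad_count d x a e (N+2))%nat) by lia.
  apply le_INR in H4. rewrite mult_INR in H4.
  replace (INR 4) with 4 in H4 by (simpl; lra).
  assert (Hp : 0 < INR (N+2)) by (apply lt_0_INR; lia).
  apply Rmult_lt_compat_r with (r := INR (N+2)) in HN; [|exact Hp].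
  unfold Rdiv in HN; rewrite Rmult_assoc, Rinv_l, Rmult_1_r in HN by lra.
  lra.
Qed.

Lemma not_open_seq (d2 : X -> X -> R) (U : X -> Prop) x0 :
  ~ (exists r, 0 < r /\ forall y, d2 x0 y < r -> U y) ->
  exists y : nat -> X, forall k, d2 x0 (y k) < / (INR k + 1) /\ ~ U (y k).
Proof.
  intros H.
  assert (H' : forall k, exists y, d2 x0 y < / (INR k + 1) /\ ~ U y).
  { intro k. apply NNPP; intro Hn. apply H. exists (/ (INR k + 1)). split.
    - apply Rinv_0_lt_compat; pose proof (pos_INR k); lra.
    - intros y Hy. apply NNPP; intro. apply Hn; eauto. }
  exists (fun k => proj1_sig (constructive_indefinite_description _ (H' k))).
  intro k. exact (proj2_sig (constructive_indefinite_description _ (H' k))).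
Qed.

Lemma z_conv (d2 : X -> X -> R) (Hm : is_metric d2) x0 (y : nat -> X) :
  (forall k, d2 x0 (y k) < / (INR k + 1)) ->
  metric_conv_to d2 (fun k => if Nat.even k then x0 else y k) x0.
Proof.
  destruct Hm as [Hp [Hz [Hs Ht]]].
  intros H e He. destruct (archimed_cor1 e He) as [N [HN HN0]]. exists N.
  intros n Hn. destruct (Nat.even n).
  - rewrite (proj2 (Hz x0 x0) eq_refl). lra.
  - rewrite Hs. eapply Rlt_le_trans; [apply H|].
    assert (0 < INR N) by (apply lt_0_INR; lia).
    apply le_INR in Hn.
    assert (/ (INR n + 1) <= / INR N) by (apply Rinv_le_contravar; lra). lra.
Qed.

Lemma even_S k : Nat.even (S k) = negb (Nat.even k).
Proof. rewrite Nat.even_succ, <- Nat.negb_even. reflexivity. Qed.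

Lemma stat_open (d1 d2 : X -> X -> R) (H1 : is_metric d1) (H2 : is_metric d2)
  (Hs : forall x, stat_convergent d2 x -> stat_convergent d1 x) U :
  metric_open d1 U -> metric_open d2 U.
Proof.
  intros HU x0 Ux0. destruct (HU x0 Ux0) as [r [Hr Hball]].
  apply NNPP; intro Hn. destruct (not_open_seq d2 U x0 Hn) as [y Hy].
  set (z := fun k => if Nat.even k then x0 else y k).
  assert (Hz : stat_convergent d2 z)
    by (exists x0; apply mconv_stat, z_conv; [exact H2| intro k; apply Hy]).
  destruct (Hs z Hz) as [b Hb].
  assert (Hyr : forall k, r <= d1 x0 (y k)).
  { intro k. destruct (Rle_dec r (d1 x0 (y k))); auto.
    exfalso. apply (proj2 (Hy k)). apply Hball. lra. }
  destruct H1 as [Hp [Hzz [Hsy Ht]]].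
  apply (not_stat d1 z b (r/2)); [lra| |exact Hb].
  intro k. unfold z. rewrite even_S.
  destruct (Rle_dec (r/2) (d1 x0 b)) as [Hc|Hc].
  - destruct (Nat.even k); simpl; auto.
  - assert (forall j, r/2 <= d1 (y j) b).
    { intro j. pose proof (Ht x0 b (y j)). pose proof (Hyr j).
      rewrite (Hsy b (y j)) in *. lra. }
    destruct (Nat.even k); simpl; auto.
Qed.

Lemma conv_open (d1 d2 : X -> X -> R) (H1 : is_metric d1) (H2 : is_metric d2)
  (Hs : forall x, metric_convergent d2 x -> metric_convergent d1 x) U :
  metric_open d1 U -> metric_open d2 U.
Proof.
  intros HU x0 Ux0. destruct (HU x0 Ux0) as [r [Hr Hball]].
  apply NNPP; intro Hn. destruct (not_open_seq d2 U x0 Hn) as [y Hy].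
  set (z := fun k => if Nat.even k then x0 else y k).
  assert (Hz : metric_convergent d2 z)
    by (exists x0; apply z_conv; [exact H2| intro k; apply Hy]).
  destruct (Hs z Hz) as [b Hb].
  destruct (Hb (r/2) ltac:(lra)) as [N HN].
  pose proof (HN (2*N)%nat ltac:(lia)) as E1.
  pose proof (HN (S (2*N))%nat ltac:(lia)) as E2.
  unfold z in E1, E2. rewrite even_S in E2.
  assert (Ev : Nat.even (2*N) = true) by (rewrite Nat.even_mul; reflexivity).
  rewrite Ev in E1, E2. cbn [negb] in E2.
  apply (proj2 (Hy (S (2*N)))). apply Hball.
  destruct H1 as [Hp [Hzz [Hsy Ht]]].
  pose proof (Ht x0 b (y (S (2*N)))). rewrite (Hsy b) in H. lra.
Qed.

Lemma ball_open (d : X -> X -> R) (Hm : is_metric d) a e :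
  metric_open d (fun y => d a y < e).
Proof.
  destruct Hm as [Hp [Hz [Hs Ht]]].
  intros x Hx. exists (e - d a x). split; [lra|].
  intros y Hy. pose proof (Ht a x y). lra.
Qed.

Lemma ball_incl (d1 d2 : X -> X -> R) (H1 : is_metric d1) (H2 : is_metric d2)
  (Ht : forall U, metric_open d2 U -> metric_open d1 U) a e :
  0 < e -> exists r, 0 < r /\ forall y, d1 a y < r -> d2 a y < e.
Proof.
  intros He. apply (Ht _ (ball_open d2 H2 a e) a).
  destruct H2 as [Hp [Hz _]]. rewrite (proj2 (Hz a a) eq_refl). exact He.
Qed.

Lemma top_stat (d1 d2 : X -> X -> R) (H1 : is_metric d1) (H2 : is_metric d2)
  (Ht : forall U, metric_open d2 U -> metric_open d1 U) x a :
  stat_conv_to d1 x a -> stat_conv_to d2 x a.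
Proof.
  intros Hs e He. destruct (ball_incl d1 d2 H1 H2 Ht a e He) as [r [Hr Hb]].
  apply squeeze with (fun n => INR (bad_count d1 x a r n) / INR n); [|apply (Hs r Hr)].
  intro n; split; [apply ratio_nonneg|]. apply ratio_mono.
  unfold bad_count. apply filter_len_mono. intros k _.
  destruct (Rle_dec e (d2 (x k) a)); destruct (Rle_dec r (d1 (x k) a)); auto.
  exfalso. destruct H1 as [_ [_ [S1 _]]]. destruct H2 as [_ [_ [S2 _]]].
  assert (d2 a (x k) < e) by (apply Hb; rewrite S1; lra). rewrite S2 in H. lra.
Qed.

Lemma top_conv (d1 d2 : X -> X -> R) (H1 : is_metric d1) (H2 : is_metric d2)
  (Ht : forall U, metric_open d2 U -> metric_open d1 U) x a :
  metric_conv_to d1 x a -> metric_conv_to d2 x a.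
Proof.
  intros Hs e He. destruct (ball_incl d1 d2 H1 H2 Ht a e He) as [r [Hr Hb]].
  destruct (Hs r Hr) as [N HN]. exists N. intros n Hn.
  destruct H1 as [_ [_ [S1 _]]]. destruct H2 as [_ [_ [S2 _]]].
  rewrite S2. apply Hb. rewrite S1. auto.
Qed.

End S.

Theorem theorem2 (X : Type) (d1 d2 : X -> X -> R)
  (H1 : is_metric d1) (H2 : is_metric d2) :
  ((forall x : nat -> X, stat_convergent d1 x <-> stat_convergent d2 x) <->
   (forall x : nat -> X, metric_convergent d1 x <-> metric_convergent d2 x)) /\
  ((forall x : nat -> X, metric_convergent d1 x <-> metric_convergent d2 x) <->
   same_topology d1 d2).
Proof.
  assert (A : (forall x : nat -> X, stat_convergent d1 x <-> stat_convergent d2 x) <->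
              same_topology d1 d2).
  { split.
    - intros Hs U. split.
      + apply (stat_open d1 d2 H1 H2). intro x. apply Hs.
      + apply (stat_open d2 d1 H2 H1). intro x. apply Hs.
    - intros Ht x. split; intros [a Ha]; exists a.
      + apply (top_stat d1 d2 H1 H2 (fun U => proj2 (Ht U))). exact Ha.
      + apply (top_stat d2 d1 H2 H1 (fun U => proj1 (Ht U))). exact Ha. }
  assert (B : (forall x : nat -> X, metric_convergent d1 x <-> metric_convergent d2 x) <->
              same_topology d1 d2).
  { split.
    - intros Hs U. split.
      + apply (conv_open d1 d2 H1 H2). intro x. apply Hs.
      + apply (conv_open d2 d1 H2 H1). intro x. apply Hs.
    - intros Ht x. split; intros [a Ha]; exists a.
      + apply (top_conv d1 d2 H1 H2 (fun U => proj2 (Ht U))). exact Ha.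
      + apply (top_conv d2 d1 H2 H1 (fun U => proj1 (Ht U))). exact Ha. }
  split; [|exact B]. rewrite A, B. tauto.
Qed.
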